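(* Let $n$ and $k$ be integers with $k\ge4$ and $n\ge3$. Then (i) $\chi_\rho(S^2_{P_k})\ge 4$, and (ii) $\chi_\rho(S^n_{P_k})\ge 5$.
   Context: $P_k$ is the path with vertex set $[k]=\{0,\dots,k-1\}$ and edges $\{i,i+1\}$, $0\le i\le k-2$. For a graph $G$ with vertex set $[k]$ and $n\ge 1$, the generalized Sierpi\'nski graph $S^n_G$ has vertex set $[k]^n$, and $u=u_1\cdots u_n$, $v=v_1\cdots v_n$ are adjacent iff there is $i$ with: $u_j=v_j$ for $j<i$; $u_i\neq v_i$ and $u_iv_i\in E(G)$; and $u_j=v_i$, $v_j=u_i$ for all $j>i$. A packing $c$-coloring of a graph $X$ is a map $f:V(X)\to\{1,\dots,c\}$ such that any two distinct vertices $u,v$ with $f(u)=f(v)=i$ satisfy $d_X(u,v)>i$; the packing chromatic number $\chi_\rho(X)$ is the least such $c$. *)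

(* Defs.v *)
From mathcomp Require Import all_boot.
From mathcomp Require Import boolp.
Set Implicit Arguments. Unset Strict Implicit. Unset Printing Implicit Defensive.

Definition path_graph (k : nat) : rel 'I_k :=
  fun a b => ((val a).+1 == val b) || ((val b).+1 == val a).

(* Generalized Sierpinski graph S^n_G, G a graph on 'I_k given by a relation.
   Vertices: words u = u_1 ... u_n, represented as {ffun 'I_n -> 'I_k}
   (position i of the paper is index i-1 here). *)
Definition sierpinski_adj (k : nat) (n : nat) (G : rel 'I_k) : rel {ffun 'I_n -> 'I_k} :=
  fun u v => [exists i : 'I_n,
    [&& [forall j : 'I_n, (j < i) ==> (u j == v j)],
        u i != v i, G (u i) (v i) &
        [forall j : 'I_n, (i < j) ==> ((u j == v i) && (v j == u i))]]].

Arguments sierpinski_adj : clear implicits.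
Arguments path_graph : clear implicits.

(* d_X(u,v) > i : every walk from u to v in the graph (T, e) has more than
   i edges (vacuous if u, v are in different components: distance infinity). *)
Definition dist_gt (T : eqType) (e : rel T) (u v : T) (i : nat) : Prop :=
  forall p : seq T, path e u p -> last u p = v -> i < size p.

Definition packing_coloring (T : finType) (e : rel T) (c : nat) (f : T -> nat) : Prop :=
  (forall x, 1 <= f x <= c) /\
  (forall u v, u != v -> f u = f v -> dist_gt e u v (f u)).

Definition has_packing_coloring (T : finType) (e : rel T) (c : nat) : Prop :=
  exists f : T -> nat, packing_coloring e c f.

Lemma has_packing_coloring_card (T : finType) (e : rel T) :
  has_packing_coloring e #|T|.
Proof.
exists (fun x => (enum_rank x).+1); split.
  by move=> x; rewrite /= ltn_ord.
by move=> u v Huv /eq_add_S /val_inj /enum_rank_inj Heq; rewrite Heq eqxx in Huv.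
Qed.

Lemma has_packing_coloring_ex (T : finType) (e : rel T) :
  exists c, (fun c => `[< has_packing_coloring e c >]) c.
Proof. by exists #|T|; apply/asboolP; apply: has_packing_coloring_card. Qed.

Definition packing_chromatic (T : finType) (e : rel T) : nat :=
  ex_minn (has_packing_coloring_ex e).

(* Main.v *)
Require Import Defs.
From mathcomp Require Import all_boot.
From mathcomp Require Import boolp.
From mathcomp Require Import zify.
Set Implicit Arguments. Unset Strict Implicit. Unset Printing Implicit Defensive.

Definition bad (cs : seq (nat*nat*nat*seq (seq nat))) (s : seq nat) : bool :=
  has (fun q => match q with (a,b,d,_) =>
     [&& a < size s, b < size s, nth 0 s a == nth 0 s b & d <= nth 0 s a] end) cs.

Fixpoint allbad cs c r s : bool :=
  match r with
  | 0 => bad cs s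
  | r'.+1 => if bad cs s then true else all (fun x => allbad cs c r' (rcons s x)) (iota 1 c)
  end.

Lemma bad_cat cs s t : bad cs s -> bad cs (s ++ t).
Proof.
move=> /hasP [[[[a b] d] p] Hin /and4P [Ha Hb Hab Hd]].
apply/hasP; exists (a,b,d,p) => //.
rewrite size_cat !nth_cat Ha Hb.
apply/and4P; split => //; lia.
Qed.

Lemma allbadP cs c r s t : allbad cs c r s -> size t = r ->
  all (fun x => 0 < x <= c) t -> bad cs (s ++ t).
Proof.
elim: r s t => [|r IH] s t /=.
  by move=> H /size0nil -> _; rewrite cats0.
case: ifP => [H _ _ _|_]; first exact: bad_cat.
case: t => [//|x t] /allP H [Ht] /andP [Hx Hall].
rewrite -cat_rcons; apply: IH => //; apply: H.
rewrite mem_iota; lia.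
Qed.

Definition adjw (m : nat) (u v : seq nat) : bool :=
  has (fun i => [&& all (fun j => nth 0 u j == nth 0 v j) (iota 0 i),
                    nth 0 u i != nth 0 v i,
                    ((nth 0 u i).+1 == nth 0 v i) || ((nth 0 v i).+1 == nth 0 u i) &
                    all (fun j => (nth 0 u j == nth 0 v i) && (nth 0 v j == nth 0 u i))
                        (iota i.+1 (m - i.+1))]) (iota 0 m).

Definition good (m : nat) (u : seq nat) : bool := (size u == m) && all (fun x => x < 4) u.

Definition phi (k' n m : nat) (l : seq nat) : {ffun 'I_n -> 'I_k'.+1} :=
  [ffun j : 'I_n => inord (if n - m <= j then nth 0 l (j - (n - m)) else 0)].

Lemma nth_lt4 m l i : good m l -> nth 0 l i < 4.
Proof.
case/andP => _ /allP Hl; case: (ltnP i (size l)) => H.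
  by apply: Hl; apply: mem_nth.
by rewrite nth_default.
Qed.

Lemma phiE k' n m l (j : 'I_n) : 3 <= k' -> good m l ->
  val (phi k' n m l j) = if n - m <= j then nth 0 l (j - (n - m)) else 0.
Proof.
move=> Hk Hl; rewrite ffunE /= inordK //; case: ifP => _ //.
have := nth_lt4 (j - (n - m)) Hl; lia.
Qed.

Lemma ordE p (a b : 'I_p) : (a == b) = (val a == val b).
Proof. by []. Qed.

Lemma phi_adj k' n m u v : 3 <= k' -> m <= n -> good m u -> good m v ->
  adjw m u v ->
  sierpinski_adj k'.+1 n (path_graph k'.+1) (phi k' n m u) (phi k' n m v).
Proof.
move=> Hk Hmn Gu Gv /hasP [i]; rewrite mem_iota add0n => /andP [_ Him].
case/and4P => /allP H1 H2 H3 /allP H4.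
set o := n - m.
have Hi : i + o < n by lia.
have Ei : Ordinal Hi - o = i by rewrite /= addnK.
apply/existsP; exists (Ordinal Hi); apply/and4P; split.
- apply/forallP => j; apply/implyP => /= Hj.
  rewrite ordE !phiE //; case: ifP => Hoj //.
  by apply: H1; rewrite mem_iota; lia.
- by rewrite ordE !phiE //= leq_addl addnK.
- by move: H3; rewrite /path_graph !phiE //= leq_addl addnK.
- apply/forallP => j; apply/implyP => /= Hj.
  rewrite !ordE !phiE //= leq_addl addnK.
  have -> : o <= j by lia.
  by apply: H4; rewrite mem_iota; have := ltn_ord j; lia.
Qed.

Lemma phi_inj k' n m u v : 3 <= k' -> m <= n -> good m u -> good m v ->
  phi k' n m u = phi k' n m v -> u = v.
Proof.
move=> Hk Hmn Gu Gv Exy.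
have Su : size u = m by case/andP: Gu => /eqP.
have Sv : size v = m by case/andP: Gv => /eqP.
apply: (eq_from_nth (x0 := 0)); first by rewrite Su Sv.
move=> i; rewrite Su => Hi.
have Hj : i + (n - m) < n by lia.
have := congr1 (fun f : {ffun 'I_n -> 'I_k'.+1} => val (f (Ordinal Hj))) Exy.
by rewrite /= !phiE //= leq_addl addnK.
Qed.

Definition valid (m : nat) (W : seq (seq nat)) (cs : seq (nat*nat*nat*seq (seq nat))) : bool :=
  all (fun q => match q with (a,b,d,p) =>
    let u := nth [::] W a in
    let v := nth [::] W b in
    [&& u != v, all (good m) (u :: p), good m v, path (adjw m) u p,
        last u p == v & size p <= d] end) cs.

Lemma no_coloring k' n m W cs c (f : {ffun 'I_n -> 'I_k'.+1} -> nat) :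
  3 <= k' -> m <= n -> valid m W cs -> allbad cs c (size W) [::] ->
  packing_coloring (sierpinski_adj k'.+1 n (path_graph k'.+1)) c f -> False.
Proof.
move=> Hk Hmn Hv Hb [Hr Hp].
set s := map (fun w => f (phi k' n m w)) W.
have Hall : all (fun x => 0 < x <= c) s by apply/allP => x /mapP [w _ ->]; exact: Hr.
have /hasP [[[[a b] d] p] Hin /and4P [Ha Hb' Hab Hd]] := allbadP Hb (size_map _ _) Hall.
move/allP: Hv => /(_ _ Hin) /and5P [Huv Hg Gv Hpath /andP [Hlast Hsz]].
rewrite /= size_map in Ha Hb'.
rewrite /= !(nth_map [::]) // in Hab Hd.
have Gu : good m (nth [::] W a) by case/andP: Hg.
have Huv' : phi k' n m (nth [::] W a) != phi k' n m (nth [::] W b).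
  by apply/negP => /eqP /(phi_inj Hk Hmn Gu Gv) E; rewrite E eqxx in Huv.
have := Hp _ _ Huv' (eqP Hab) (map (phi k' n m) p).
rewrite !size_map last_map (eqP Hlast).
have -> : path (sierpinski_adj k'.+1 n (path_graph k'.+1)) (phi k' n m (nth [::] W a))
    (map (phi k' n m) p).
  apply: (homo_path_in (P := good m)) Hg Hpath.
  by move=> x y Gx Gy; apply: phi_adj.
move=> /(_ isT erefl); lia.
Qed.

Lemma lower_bound (T : finType) (e : rel T) N :
  (forall c f, c < N -> packing_coloring e c f -> False) -> N <= packing_chromatic e.
Proof.
move=> H; rewrite /packing_chromatic; case: ex_minnP => c /asboolP [f Hf] _.
by rewrite leqNgt; apply/negP => /H /(_ Hf).
Qed.

Lemma restrict_col (T : finType) (e : rel T) c c' f :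
  c <= c' -> packing_coloring e c f -> packing_coloring e c' f.
Proof. by move=> Hc [H1 H2]; split => // x; have := H1 x; lia. Qed.

Definition W1 : seq (seq nat) := [::[::1;0];[::1;1];[::1;2];[::1;3];[::2;0];[::2;1];[::2;2];[::2;3]].
Definition C1 : seq (nat*nat*nat*seq (seq nat)) := [::
 (0,1,1,[::[::1;1]]);
 (0,2,2,[::[::1;1];[::1;2]]);
 (0,3,3,[::[::1;1];[::1;2];[::1;3]]);
 (0,5,3,[::[::1;1];[::1;2];[::2;1]]);
 (1,2,1,[::[::1;2]]);
 (1,3,2,[::[::1;2];[::1;3]]);
 (1,4,3,[::[::1;2];[::2;1];[::2;0]]);
 (1,5,2,[::[::1;2];[::2;1]]);
 (1,6,3,[::[::1;2];[::2;1];[::2;2]]);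
 (2,3,1,[::[::1;3]]);
 (2,4,2,[::[::2;1];[::2;0]]);
 (2,5,1,[::[::2;1]]);
 (2,6,2,[::[::2;1];[::2;2]]);
 (2,7,3,[::[::2;1];[::2;2];[::2;3]]);
 (3,4,3,[::[::1;2];[::2;1];[::2;0]]);
 (3,5,2,[::[::1;2];[::2;1]]);
 (3,6,3,[::[::1;2];[::2;1];[::2;2]]);
 (4,5,1,[::[::2;1]]);
 (4,6,2,[::[::2;1];[::2;2]]);
 (4,7,3,[::[::2;1];[::2;2];[::2;3]]);
 (5,6,1,[::[::2;2]]);
 (5,7,2,[::[::2;2];[::2;3]]);
 (6,7,1,[::[::2;3]])].
Definition W2 : seq (seq nat) := [::[::1;2;3];[::1;2;2];[::1;2;1];[::2;1;1];[::1;1;2];[::1;2;0];[::1;1;1];[::1;1;3];[::1;3;2];[::2;1;0];[::2;1;2];[::2;0;1];[::2;1;3];[::2;2;1];[::1;3;1];[::1;3;3];[::2;2;0];[::2;2;2];[::2;0;0];[::2;0;2]].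
Definition C2 : seq (nat*nat*nat*seq (seq nat)) := [::
 (0,1,1,[::[::1;2;2]]);
 (0,2,2,[::[::1;2;2];[::1;2;1]]);
 (0,3,2,[::[::1;2;2];[::2;1;1]]);
 (0,4,3,[::[::1;2;2];[::1;2;1];[::1;1;2]]);
 (0,5,3,[::[::1;2;2];[::1;2;1];[::1;2;0]]);
 (0,6,4,[::[::1;2;2];[::1;2;1];[::1;1;2];[::1;1;1]]);
 (0,7,4,[::[::1;2;2];[::1;2;1];[::1;1;2];[::1;1;3]]);
 (0,8,1,[::[::1;3;2]]);
 (0,9,3,[::[::1;2;2];[::2;1;1];[::2;1;0]]);
 (0,10,3,[::[::1;2;2];[::2;1;1];[::2;1;2]]);
 (0,11,4,[::[::1;2;2];[::2;1;1];[::2;1;0];[::2;0;1]]);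
 (0,12,4,[::[::1;2;2];[::2;1;1];[::2;1;2];[::2;1;3]]);
 (0,13,4,[::[::1;2;2];[::2;1;1];[::2;1;2];[::2;2;1]]);
 (0,14,2,[::[::1;3;2];[::1;3;1]]);
 (0,15,2,[::[::1;3;2];[::1;3;3]]);
 (1,2,1,[::[::1;2;1]]);
 (1,3,1,[::[::2;1;1]]);
 (1,4,2,[::[::1;2;1];[::1;1;2]]);
 (1,5,2,[::[::1;2;1];[::1;2;0]]);
 (1,6,3,[::[::1;2;1];[::1;1;2];[::1;1;1]]);
 (1,7,3,[::[::1;2;1];[::1;1;2];[::1;1;3]]);
 (1,8,2,[::[::1;2;3];[::1;3;2]]);
 (1,9,2,[::[::2;1;1];[::2;1;0]]);
 (1,10,2,[::[::2;1;1];[::2;1;2]]);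
 (1,11,3,[::[::2;1;1];[::2;1;0];[::2;0;1]]);
 (1,12,3,[::[::2;1;1];[::2;1;2];[::2;1;3]]);
 (1,13,3,[::[::2;1;1];[::2;1;2];[::2;2;1]]);
 (1,14,3,[::[::1;2;3];[::1;3;2];[::1;3;1]]);
 (1,15,3,[::[::1;2;3];[::1;3;2];[::1;3;3]]);
 (1,16,4,[::[::2;1;1];[::2;1;2];[::2;2;1];[::2;2;0]]);
 (1,17,4,[::[::2;1;1];[::2;1;2];[::2;2;1];[::2;2;2]]);
 (1,18,4,[::[::2;1;1];[::2;1;0];[::2;0;1];[::2;0;0]]);
 (1,19,4,[::[::2;1;1];[::2;1;0];[::2;0;1];[::2;0;2]]);
 (2,3,2,[::[::1;2;2];[::2;1;1]]);
 (2,4,1,[::[::1;1;2]]);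
 (2,5,1,[::[::1;2;0]]);
 (2,6,2,[::[::1;1;2];[::1;1;1]]);
 (2,7,2,[::[::1;1;2];[::1;1;3]]);
 (2,8,3,[::[::1;2;2];[::1;2;3];[::1;3;2]]);
 (2,9,3,[::[::1;2;2];[::2;1;1];[::2;1;0]]);
 (2,10,3,[::[::1;2;2];[::2;1;1];[::2;1;2]]);
 (2,11,4,[::[::1;2;2];[::2;1;1];[::2;1;0];[::2;0;1]]);
 (2,12,4,[::[::1;2;2];[::2;1;1];[::2;1;2];[::2;1;3]]);
 (2,13,4,[::[::1;2;2];[::2;1;1];[::2;1;2];[::2;2;1]]);
 (2,14,4,[::[::1;2;2];[::1;2;3];[::1;3;2];[::1;3;1]]);
 (2,15,4,[::[::1;2;2];[::1;2;3];[::1;3;2];[::1;3;3]]);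
 (3,4,3,[::[::1;2;2];[::1;2;1];[::1;1;2]]);
 (3,5,3,[::[::1;2;2];[::1;2;1];[::1;2;0]]);
 (3,6,4,[::[::1;2;2];[::1;2;1];[::1;1;2];[::1;1;1]]);
 (3,7,4,[::[::1;2;2];[::1;2;1];[::1;1;2];[::1;1;3]]);
 (3,8,3,[::[::1;2;2];[::1;2;3];[::1;3;2]]);
 (3,9,1,[::[::2;1;0]]);
 (3,10,1,[::[::2;1;2]]);
 (3,11,2,[::[::2;1;0];[::2;0;1]]);
 (3,12,2,[::[::2;1;2];[::2;1;3]]);
 (3,13,2,[::[::2;1;2];[::2;2;1]]);
 (3,14,4,[::[::1;2;2];[::1;2;3];[::1;3;2];[::1;3;1]]);
 (3,15,4,[::[::1;2;2];[::1;2;3];[::1;3;2];[::1;3;3]]);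
 (3,16,3,[::[::2;1;2];[::2;2;1];[::2;2;0]]);
 (3,17,3,[::[::2;1;2];[::2;2;1];[::2;2;2]]);
 (3,18,3,[::[::2;1;0];[::2;0;1];[::2;0;0]]);
 (3,19,3,[::[::2;1;0];[::2;0;1];[::2;0;2]]);
 (4,5,2,[::[::1;2;1];[::1;2;0]]);
 (4,6,1,[::[::1;1;1]]);
 (4,7,1,[::[::1;1;3]]);
 (4,8,4,[::[::1;2;1];[::1;2;2];[::1;2;3];[::1;3;2]]);
 (4,9,4,[::[::1;2;1];[::1;2;2];[::2;1;1];[::2;1;0]]);
 (4,10,4,[::[::1;2;1];[::1;2;2];[::2;1;1];[::2;1;2]]);
 (5,6,3,[::[::1;2;1];[::1;1;2];[::1;1;1]]);
 (5,7,3,[::[::1;2;1];[::1;1;2];[::1;1;3]]);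
 (5,8,4,[::[::1;2;1];[::1;2;2];[::1;2;3];[::1;3;2]]);
 (5,9,4,[::[::1;2;1];[::1;2;2];[::2;1;1];[::2;1;0]]);
 (5,10,4,[::[::1;2;1];[::1;2;2];[::2;1;1];[::2;1;2]]);
 (6,7,2,[::[::1;1;2];[::1;1;3]]);
 (8,9,4,[::[::1;2;3];[::1;2;2];[::2;1;1];[::2;1;0]]);
 (8,10,4,[::[::1;2;3];[::1;2;2];[::2;1;1];[::2;1;2]]);
 (8,14,1,[::[::1;3;1]]);
 (8,15,1,[::[::1;3;3]]);
 (9,10,2,[::[::2;1;1];[::2;1;2]]);
 (9,11,1,[::[::2;0;1]]);
 (9,12,3,[::[::2;1;1];[::2;1;2];[::2;1;3]]);
 (9,13,3,[::[::2;1;1];[::2;1;2];[::2;2;1]]);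
 (9,16,4,[::[::2;1;1];[::2;1;2];[::2;2;1];[::2;2;0]]);
 (9,17,4,[::[::2;1;1];[::2;1;2];[::2;2;1];[::2;2;2]]);
 (9,18,2,[::[::2;0;1];[::2;0;0]]);
 (9,19,2,[::[::2;0;1];[::2;0;2]]);
 (10,11,3,[::[::2;1;1];[::2;1;0];[::2;0;1]]);
 (10,12,1,[::[::2;1;3]]);
 (10,13,1,[::[::2;2;1]]);
 (10,16,2,[::[::2;2;1];[::2;2;0]]);
 (10,17,2,[::[::2;2;1];[::2;2;2]]);
 (10,18,4,[::[::2;1;1];[::2;1;0];[::2;0;1];[::2;0;0]]);
 (10,19,4,[::[::2;1;1];[::2;1;0];[::2;0;1];[::2;0;2]]);
 (11,12,4,[::[::2;1;0];[::2;1;1];[::2;1;2];[::2;1;3]]);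
 (11,13,4,[::[::2;1;0];[::2;1;1];[::2;1;2];[::2;2;1]]);
 (11,18,1,[::[::2;0;0]]);
 (11,19,1,[::[::2;0;2]]);
 (12,13,2,[::[::2;1;2];[::2;2;1]]);
 (12,16,3,[::[::2;1;2];[::2;2;1];[::2;2;0]]);
 (12,17,3,[::[::2;1;2];[::2;2;1];[::2;2;2]]);
 (13,16,1,[::[::2;2;0]]);
 (13,17,1,[::[::2;2;2]]);
 (14,15,2,[::[::1;3;2];[::1;3;3]]);
 (16,17,2,[::[::2;2;1];[::2;2;2]]);
 (18,19,2,[::[::2;0;1];[::2;0;2]])].


Lemma valid1 : valid 2 W1 C1. Proof. by vm_compute. Qed.
Lemma valid2 : valid 3 W2 C2. Proof. by vm_compute. Qed.
Lemma allbad1 : allbad C1 3 (size W1) [::]. Proof. by vm_compute. Qed.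
Lemma allbad2 : allbad C2 4 (size W2) [::]. Proof. by vm_compute. Qed.

Theorem proposition2 (n k : nat) : 4 <= k -> 3 <= n ->
  4 <= packing_chromatic (sierpinski_adj k 2 (path_graph k)) /\
  5 <= packing_chromatic (sierpinski_adj k n (path_graph k)).
Proof.
case: k => [//|k'] Hk Hn; split; apply: lower_bound => c f Hc Hf.
- apply: (@no_coloring k' 2 2 W1 C1 3 f Hk (leqnn 2) valid1 allbad1).
  by apply: restrict_col Hf; lia.
- apply: (@no_coloring k' n 3 W2 C2 4 f Hk Hn valid2 allbad2).
  by apply: restrict_col Hf; lia.
Qed.
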